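(* Let $p$ be an odd prime, $m\geq 1$, $Q=T_{(p^m)}$ and $K=K_Q(p)$. An element $M\in K$ satisfies $M^p=\mathbbm{1}$ if either $M=S_\xi$ for some $S_\xi\in T_{(p)}$, or $M=S_\xi X^b$ with $S_\xi\in Q$ and $b\neq 0$.
   Context: Let $\{|q\rangle:q\in\mathbb{Z}_p\}$ be the computational basis of $\mathbb{C}^p$ and $X|q\rangle=|q+1\rangle$ the shift operator. For $\xi:\mathbb{Z}_p\to U(1)$ let $S_\xi=\mathrm{diag}(\xi(0),\dots,\xi(p-1))$. Let $T=\{S_\xi:\prod_{q\in\mathbb{Z}_p}\xi(q)=1\}$ (a maximal torus of $SU(p)$) and for $k\ge1$, $T_{(p^k)}=\{S\in T: S^{p^k}=\mathbbm{1}\}$. $K_Q(p)$ is the subgroup of $SU(p)$ generated by all $S_\xi X^b$ with $S_\xi\in Q$, $b\in\mathbb{Z}_p$. *)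

(* Defs.v *)
From HB Require Import structures.
From mathcomp Require Import all_boot all_order all_algebra.
Set Implicit Arguments. Unset Strict Implicit. Unset Printing Implicit Defensive.
Import Order.TTheory GRing.Theory Num.Theory.
Local Open Scope ring_scope.

(* Complex scalars: any numeric algebraically closed field C (e.g. algC or
   complex R).  The computational basis |q>, q in Z_p, is indexed by 'I_p,
   with addition mod p written via nat arithmetic. *)

Definition Sxi (C : numClosedFieldType) (p : nat) (xi : 'I_p -> C) : 'M[C]_p :=
  diag_mx (\row_q xi q).

(* shift operator X|q> = |q+1 mod p>, i.e. X_{i,j} = [i = j+1 mod p] *)
Definition Xshift (C : numClosedFieldType) (p : nat) : 'M[C]_p :=
  \matrix_(i, j) ((nat_of_ord i == (nat_of_ord j).+1 %% p)%N)%:R.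

Definition inT (C : numClosedFieldType) (p : nat) (S : 'M[C]_p) : Prop :=
  exists xi : 'I_p -> C,
    S = Sxi xi /\ (forall q, `|xi q| = 1) /\ \prod_(q < p) xi q = 1.

Definition inTpk (C : numClosedFieldType) (p k : nat) (S : 'M[C]_p) : Prop :=
  inT S /\ S ^+ (p ^ k) = 1.

(* K_Q(p): subgroup generated by all S X^b with S in Q, b in Z_p
   (closure of 1 under left multiplication by generators and their inverses). *)
Inductive KQ (C : numClosedFieldType) (p : nat) (Q : 'M[C]_p -> Prop)
  : 'M[C]_p -> Prop :=
| KQ_one : KQ Q 1
| KQ_gen (S : 'M[C]_p) (b : 'I_p) (M : 'M[C]_p) :
    Q S -> KQ Q M -> KQ Q ((S *m (Xshift C p) ^+ b) *m M)
| KQ_inv (S : 'M[C]_p) (b : 'I_p) (M : 'M[C]_p) :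
    Q S -> KQ Q M -> KQ Q (invmx (S *m (Xshift C p) ^+ b) *m M).

(* Main.v *)
Require Import Defs.
From HB Require Import structures.
From mathcomp Require Import all_boot all_order all_algebra.
Import Order.TTheory GRing.Theory Num.Theory.
Local Open Scope ring_scope.

Lemma Xpow_entry (C : numClosedFieldType) (n b : nat) (i j : 'I_n.+1) :
  (Xshift C n.+1 ^+ b) i j = ((i : nat) == (j + b) %% n.+1)%N%:R.
Proof.
elim: b i j => [|b IH] i j.
  by rewrite expr0 mxE addn0 modn_small.
rewrite exprSr mxE (bigD1 (inord ((j.+1) %% n.+1))) //= big1.
  rewrite IH !mxE inordK ?ltn_pmod // eqxx mulr1 addr0.
  by rewrite modnDml addSnnS addnC addSn.
move=> k Hk; rewrite mxE.
have -> : ((k : nat) == j.+1 %% n.+1)%N = false.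
  by apply/negbTE/negP => /eqP E; rewrite -E inord_val eqxx in Hk.
by rewrite mulr0.
Qed.

Lemma SX_entry (C : numClosedFieldType) (n b : nat) (xi : 'I_n.+1 -> C) (i j : 'I_n.+1) :
  (Sxi xi *m Xshift C n.+1 ^+ b) i j = xi i * ((i : nat) == (j + b) %% n.+1)%N%:R.
Proof.
rewrite /Sxi mul_diag_mx mxE Xpow_entry mxE //.
Qed.

Lemma SXpow_entry (C : numClosedFieldType) (n b k : nat) (xi : 'I_n.+1 -> C) (i j : 'I_n.+1) :
  ((Sxi xi *m Xshift C n.+1 ^+ b) ^+ k) i j =
  ((i : nat) == (j + k * b) %% n.+1)%N%:R *
  \prod_(l < k) xi (inord ((j + l.+1 * b) %% n.+1)).
Proof.
elim: k i j => [|k IH] i j.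
  by rewrite expr0 mxE mul0n addn0 modn_small // big_ord0 mulr1.
rewrite exprSr mxE (bigD1 (inord ((j + b) %% n.+1))) //= big1.
  rewrite IH SX_entry inordK ?ltn_pmod // eqxx mulr1 addr0.
  rewrite modnDml -addnA (addnC b) -mulSnr big_ord_recl /=.
  rewrite mul1n -mulrA; congr (_ * _); rewrite mulrC; congr (_ * _).
  apply: eq_bigr => l _; congr (xi (inord _)).
  by rewrite modnDml -addnA -mulSn /bump leq0n add1n.
move=> l Hk; rewrite SX_entry.
have -> : ((l : nat) == (j + b) %% n.+1)%N = false.
  by apply/negbTE/negP => /eqP E; rewrite -E inord_val eqxx in Hk.
by rewrite !mulr0.
Qed.

Lemma cyc_inj (n b j : nat) : prime n.+1 -> (0 < b < n.+1)%N ->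
  injective (fun l : 'I_n.+1 => (inord ((j + l.+1 * b) %% n.+1) : 'I_n.+1)).
Proof.
move=> pr /andP [b0 bn].
have cop : coprime n.+1 b.
  rewrite prime_coprime //; apply/negP => /(dvdn_leq b0); by rewrite leqNgt bn.
have key : forall l l' : 'I_n.+1, (l <= l')%N ->
   inord ((j + l.+1 * b) %% n.+1) = inord ((j + l'.+1 * b) %% n.+1) :> 'I_n.+1 -> l = l'.
  move=> l l' ll' /(congr1 val); rewrite /= !inordK ?ltn_pmod // => /eqP.
  rewrite eqn_modDl eq_sym eqn_mod_dvd; last by rewrite leq_mul2r ltnS ll' orbT.
  rewrite -mulnBl Gauss_dvdl // subSS => H.
  apply/val_inj/eqP; rewrite eqn_leq ll' /=.
  have : (l' - l < n.+1)%N by apply: leq_ltn_trans (leq_subr _ _) (ltn_ord l').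
  move: H; case: (l' - l)%N (@subn_eq0 l' l) => [|d] E.
    by rewrite -E.
  by move=> /(dvdn_leq (ltn0Sn _)); rewrite leqNgt => /negbTE ->.
move=> l l'; case: (leqP l l') => h; first exact: key.
by move=> E; symmetry; apply: key (ltnW h) (esym E).
Qed.

Theorem lemma2 (C : numClosedFieldType) (p m : nat) (M : 'M[C]_p) :
  prime p -> odd p -> (1 <= m)%N ->
  KQ (@inTpk C p m) M ->
  ((exists xi : 'I_p -> C, @inTpk C p 1 (Sxi xi) /\ M = Sxi xi) \/
   (exists (xi : 'I_p -> C) (b : 'I_p),
      @inTpk C p m (Sxi xi) /\ nat_of_ord b <> 0%N /\
      M = Sxi xi *m (Xshift C p) ^+ b)) ->
  M ^+ p = 1.
Proof.
move=> pr _ _ _ [[xi [[_ H] ->]]|[xi [b [[[xi' [E [_ P]]] _] [b0 ->]]]]].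
  by rewrite expn1 in H.
case: p pr M xi b xi' E P b0 => [//|n] pr M xi b xi' E P b0.
have P2 : \prod_(q < n.+1) xi q = 1.
  rewrite -[RHS]P; apply: eq_bigr => q _.
  by move/matrixP: E => /(_ q q); rewrite /Sxi !mxE !eqxx !mulr1n.
have bb : (0 < b < n.+1)%N by rewrite lt0n ltn_ord andbT; apply/eqP.
apply/matrixP => i j; rewrite SXpow_entry mxE.
rewrite (addnC j) mulnC modnMDl modn_small //.
rewrite -(reindex_inj (F := xi) (P := predT) (cyc_inj _ _ j pr bb)) P2 mulr1.
by [].
Qed.
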